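(* Every real matrix that satisfies the dominance condition has full row rank, and each of its columns contains exactly one entry equal to $1$.
   Context: A matrix $C_1$ covers $C_2$ if $C_1-C_2$ is entrywise nonnegative. A matrix is columnwise normal if its entries lie in $[0,1]$ and every column has at least one entry equal to $1$. A columnwise normal matrix with $n$ rows satisfies the dominance condition if (a) there is an $n\times n$ submatrix (formed by $n$ of its columns) covering a permutation matrix, and (b) for every $n\times n$ such submatrix covering a permutation matrix, the sum of each row is less than $2$. *)

(* Defs.v *)
From HB Require Import structures.
From mathcomp Require Import all_boot all_order all_algebra all_fingroup.
From mathcomp Require Import reals.
Set Implicit Arguments. Unset Strict Implicit. Unset Printing Implicit Defensive.
Import Order.TTheory GRing.Theory Num.Theory.
Local Open Scope ring_scope.

Definition covers (R : numDomainType) (p q : nat) (C1 C2 : 'M[R]_(p, q)) : Prop :=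
  forall i j, 0 <= C1 i j - C2 i j.

Definition columnwise_normal (R : numDomainType) (n m : nat) (C : 'M[R]_(n, m)) : Prop :=
  (forall i j, 0 <= C i j <= 1) /\ (forall j, exists i, C i j = 1).

Definition sub_covers_perm (R : numDomainType) (n m : nat) (C : 'M[R]_(n, m))
  (f : 'I_n -> 'I_m) : Prop :=
  injective f /\ exists s : 'S_n, covers (colsub f C) (perm_mx s).

Definition dominance (R : numDomainType) (n m : nat) (C : 'M[R]_(n, m)) : Prop :=
  [/\ columnwise_normal C,
      (exists f : 'I_n -> 'I_m, sub_covers_perm C f) &
      (forall f : 'I_n -> 'I_m, sub_covers_perm C f ->
         forall i : 'I_n, \sum_(j < n) colsub f C i j < 2)].

(* Main.v *)
Require Import Defs.
From HB Require Import structures.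
From mathcomp Require Import all_boot all_order all_algebra all_fingroup.
From mathcomp Require Import reals.
From mathcomp Require Import ring lra.
Import Order.TTheory GRing.Theory Num.Theory.
Local Open Scope ring_scope.

Lemma sum2_ge (R : realType) (n : nat) (F : 'I_n -> R) (i k : 'I_n) :
  (forall j, 0 <= F j) -> i != k -> F i + F k <= \sum_j F j.
Proof.
move=> F0 ik.
rewrite (bigD1 i) //= (bigD1 k) 1?eq_sym //= lerD2l lerDl.
by apply: sumr_ge0 => j _; apply: F0.
Qed.

Lemma sub_cov_id (R : realType) (n m : nat) (C : 'M[R]_(n, m)) (g : 'I_n -> 'I_m) :
  (forall i j, 0 <= C i j <= 1) -> injective g -> (forall i, C i (g i) = 1) ->
  sub_covers_perm C g.
Proof.
move=> C01 ginj Cg; split => //; exists 1%g => i j.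
rewrite perm_mx1 !mxE.
case: eqP => [->|_]; first by rewrite Cg subrr.
by rewrite subr0; case/andP: (C01 i (g j)).
Qed.

Lemma ones_contra (R : realType) (n m : nat) (C : 'M[R]_(n, m)) (g : 'I_n -> 'I_m) :
  dominance C -> injective g -> (forall i, C i (g i) = 1) ->
  forall i k, i != k -> C i (g k) = 1 -> False.
Proof.
case=> [[C01 _] _ H3] ginj Cg i k ik Cik.
have := H3 g (@sub_cov_id _ _ _ C g C01 ginj Cg) i.
have := @sum2_ge R n (fun j => colsub g C i j) i k.
rewrite !mxE Cg Cik => /(_ _ ik) H.
have H' : forall j, 0 <= colsub g C i j by move=> j; rewrite mxE; case/andP: (C01 i (g j)).
move: (H H').
move=> a b.
have := lt_le_trans b a.
by rewrite ltxx.
Qed.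

Lemma rank_part (R : realType) (n m : nat) (C : 'M[R]_(n, m)) (g : 'I_n -> 'I_m) :
  (forall i j, 0 <= C i j <= 1) ->
  (forall i, \sum_(j < n) C i (g j) < 2) -> (forall i, C i (g i) = 1) ->
  \rank C = n.
Proof.
move=> C01 Hs Cg.
set B := colsub g C.
have fr : row_free B^T.
  apply: inj_row_free => v Hv.
  have Hk : forall k, 0 = \sum_j v 0 j * C k (g j).
    move=> k; have := congr1 (fun M : 'rV_n => M 0 k) Hv.
    rewrite !mxE => E; rewrite -[X in X = _]E; by apply: eq_bigr => j _; rewrite !mxE.
  suff Hz : forall i, v 0 i = 0.
    apply/matrixP => a i; rewrite ord1 mxE; exact: Hz.
  move=> i.
  case: (@arg_maxP _ _ _ i predT (fun k => `|v 0 k|) isT) => k _ kmax.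
  have : `|v 0 k| <= 0.
    have E := Hk k.
    rewrite (bigD1 k) //= Cg mulr1 in E.
    have E2 : v 0 k = - \sum_(j | j != k) v 0 j * C k (g j).
      by apply/eqP; rewrite -addr_eq0 -E.
    have L1 : `|v 0 k| <= `|v 0 k| * \sum_(j | j != k) C k (g j).
      rewrite {1}E2 normrN mulr_sumr.
      apply: le_trans (ler_norm_sum _ _ _) _.
      apply: ler_sum => j _.
      have [c0 c1] := andP (C01 k (g j)).
      rewrite normrM (ger0_norm c0) mulrC.
      by rewrite [X in _ <= X]mulrC; apply: ler_wpM2l => //; apply: kmax.
    have Hk2 := Hs k.
    rewrite (bigD1 k) //= Cg in Hk2.
    have S1 : \sum_(j | j != k) C k (g j) < 1.
      by rewrite -(ltrD2l 1) (lt_le_trans Hk2) // -[2]/(1+1).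
    have nn : 0 <= `|v 0 k| := normr_ge0 _.
    nra.
  move=> H0.
  have : `|v 0 i| <= 0 by apply: le_trans (kmax i isT) H0.
  by rewrite normr_le0 => /eqP.
have rB : \rank B = n by rewrite -mxrank_tr; apply/eqP.
apply/eqP; rewrite eqn_leq rank_leq_row /= -{1}rB.
have -> : B = C *m colsub g 1%:M by rewrite mulmx_colsub mulmx1.
exact: mxrankM_maxl.
Qed.

Theorem lemma4p6 (R : realType) (n m : nat) (C : 'M[R]_(n, m)) :
  dominance C ->
  \rank C = n /\ (forall j : 'I_m, exists! i : 'I_n, C i j = 1).
Proof.
move=> D; have D' := D; case: D' => [[C01 C1] [f [finj [s cov]]] H3].
pose g := f \o s.
have ginj : injective g by apply: inj_comp => //; apply: perm_inj.
have Cg : forall i, C i (g i) = 1.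
  move=> i; have := cov i (s i); rewrite perm_mxEsub !mxE eqxx subr_ge0 => H.
  by apply/le_anti; rewrite H andbT; case/andP: (C01 i (g i)).
split.
  apply: (@rank_part _ _ _ C g C01 _ Cg) => i.
  have := H3 g (@sub_cov_id _ _ _ C g C01 ginj Cg) i.
  by under eq_bigr do rewrite mxE.
move=> j; have [i0 Ci0] := C1 j; exists i0; split => // i1 Ci1.
case: (eqVneq i1 i0) => // ne; exfalso.
case: (boolP [exists k, g k == j]) => [/existsP [k /eqP gk]|nex].
  case: (eqVneq i0 k) => [e|ne0].
    subst i0.
    apply: (@ones_contra _ _ _ C _ D ginj Cg i1 k); first exact: ne.
    by rewrite gk.
  by apply: (@ones_contra _ _ _ C _ D ginj Cg _ _ ne0); rewrite gk.
pose g' := fun i => if i == i0 then j else g i.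
have g'inj : injective g'.
  move=> a b; rewrite /g'.
  case: (eqVneq a i0) => [->|na]; case: (eqVneq b i0) => [->|nb] //.
  - by move=> e; move/existsP: nex; case; exists b; rewrite e.
  - by move=> e; move/existsP: nex; case; exists a; rewrite -e.
  - exact: ginj.
have Cg' : forall i, C i (g' i) = 1.
  by move=> i; rewrite /g'; case: (eqVneq i i0) => [->|_].
apply: (@ones_contra _ _ _ C _ D g'inj Cg' i1 i0); first exact: ne.
by rewrite /g' eqxx.
Qed.
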